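(* Let $Q=(M,\Omega)$ be a $2$-sheltering matroid on ground set $U$ such that the multimatroid $\mathcal Z(Q)$ is tight, and suppose $M$ is representable over a field $\mathbb F$. Then $r(M)=|\Omega|$ (so $Q$ is strict). Moreover, if $B$ is a basis of $M$ that is a transversal of $\Omega$ and $T=U\setminus B$ (a transversal), then for every standard $\mathbb F$-representation $(I\mid A)$ of $M$ with respect to $B$ (identity columns indexed by $B$, columns of $A$ indexed by $T$), the matrix $A$ is zero-diagonal, i.e. $A_{b,t}=0$ whenever $\{b,t\}\in\Omega$. If $\mathbb F=GF(2)$, then $A$ is in addition symmetric, i.e. $A_{b,t}=A_{b',t'}$ whenever $\{b,t'\},\{b',t\}\in\Omega$.
   Context: Let $\Omega$ be a partition of a finite set $U$; a subtransversal (transversal) meets every class in at most (exactly) one element. A sheltering matroid is a pair $Q=(M,\Omega)$ with $M$ a matroid on $U$ such that for every independent subtransversal $I$ of $M$ and every $2$-element subset $\{x,y\}$ of a class $\omega$ with $\omega\cap I=\emptyset$, $I\cup\{x\}$ or $I\cup\{y\}$ is independent in $M$; it is a $2$-sheltering matroid if all classes have size $2$, and strict if $r(M)\le|\Omega|$. $\mathcal Z(Q)$ is the multimatroid on $(U,\Omega)$ whose independent sets are the independent subtransversals of $M$. $\mathcal Z(Q)$ is tight if every class has size $>1$ and for every subtransversal $S$ with $|S|=|\Omega|-1$, letting $\omega$ be the class disjoint from $S$, there is $x\in\omega$ with $r_M(S\cup\{x\})=r_M(S)$. *)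

(* Defs.v *)
From HB Require Import structures.
From mathcomp Require Import all_boot all_algebra.
Set Implicit Arguments. Unset Strict Implicit. Unset Printing Implicit Defensive.
Import GRing.Theory.
Local Open Scope ring_scope.

Record matroid (U : finType) := Matroid {
  indep : {set U} -> bool;
  indep0 : indep set0;
  indep_sub : forall X Y : {set U}, Y \subset X -> indep X -> indep Y;
  indep_aug : forall X Y : {set U}, indep X -> indep Y -> (#|X| < #|Y|)%N ->
      exists2 x, x \in Y :\: X & indep (x |: X)
}.

Definition mrank (U : finType) (M : matroid U) (S : {set U}) : nat :=
  \max_(I : {set U} | (I \subset S) && indep M I) #|I|.

Definition mrankM (U : finType) (M : matroid U) : nat := mrank M setT.

Definition is_basis (U : finType) (M : matroid U) (B : {set U}) : Prop :=
  indep M B /\ forall x, x \notin B -> ~~ indep M (x |: B).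

Definition subtransversal (U : finType) (Omega : {set {set U}}) (S : {set U}) :=
  forall w, w \in Omega -> (#|S :&: w| <= 1)%N.
Definition om_transversal (U : finType) (Omega : {set {set U}}) (S : {set U}) :=
  forall w, w \in Omega -> #|S :&: w| = 1%N.

Definition sheltering (U : finType) (M : matroid U) (Omega : {set {set U}}) :=
  partition Omega [set: U] /\
  forall (I : {set U}) (w : {set U}) (x y : U),
    indep M I -> subtransversal Omega I -> w \in Omega -> [disjoint w & I] ->
    x \in w -> y \in w -> x != y ->
    indep M (x |: I) || indep M (y |: I).

Definition two_sheltering (U : finType) (M : matroid U) (Omega : {set {set U}}) :=
  sheltering M Omega /\ forall w, w \in Omega -> #|w| = 2%N.

Definition Z_tight (U : finType) (M : matroid U) (Omega : {set {set U}}) :=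
  (forall w, w \in Omega -> (1 < #|w|)%N) /\
  forall (S w : {set U}), subtransversal Omega S -> #|S| = (#|Omega| - 1)%N ->
    w \in Omega -> [disjoint w & S] ->
    exists2 x, x \in w & mrank M (x |: S) = mrank M S.

Definition represents (F : fieldType) (U : finType) (n : nat)
    (M : matroid U) (v : U -> 'rV[F]_n) : Prop :=
  forall S : {set U},
    indep M S = row_free (\matrix_(i < #|S|) v (enum_val i)).

Definition representable (F : fieldType) (U : finType) (M : matroid U) : Prop :=
  exists n (v : U -> 'rV[F]_n), represents M v.

(* The columns of the standard matrix (I | A) w.r.t. B: coordinates are
   indexed by B (embedded in the coordinates indexed by U, the coordinates
   outside B being identically 0).  Column u in B is the unit vector e_u,
   column t not in B is (A b t)_{b in B}. *)
Definition std_vec (F : fieldType) (U : finType) (B : {set U}) (A : U -> U -> F)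
    (u : U) : 'rV[F]_#|U| :=
  \row_(j < #|U|) (let b := enum_val j in
     if b \in B then (if u \in B then (u == b)%:R else A b u) else 0).

Definition std_rep (F : fieldType) (U : finType) (M : matroid U)
    (B : {set U}) (A : U -> U -> F) : Prop :=
  represents M (std_vec B A).

(* Main.v *)
Require Import Defs.
From HB Require Import structures.
From mathcomp Require Import all_boot all_algebra.
From mathcomp Require Import zify.
Set Implicit Arguments. Unset Strict Implicit. Unset Printing Implicit Defensive.
Import GRing.Theory.
Local Open Scope ring_scope.


Lemma mrank_ge (U : finType) (M : matroid U) (J X : {set U}) :
  J \subset X -> indep M J -> (#|J| <= mrank M X)%N.
Proof.
move=> JX iJ; rewrite /mrank.
exact: (@leq_bigmax_cond _ (fun I : {set U} => (I \subset X) && indep M I) (fun I => #|I|) J (introT andP (conj JX iJ))).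
Qed.

Lemma mrank_le (U : finType) (M : matroid U) (X : {set U}) :
  (mrank M X <= #|X|)%N.
Proof. by apply/bigmax_leqP => I /andP [IX _]; apply: subset_leq_card. Qed.

Lemma mrank_lt (U : finType) (M : matroid U) (X : {set U}) :
  ~~ indep M X -> (mrank M X < #|X|)%N.
Proof.
move=> nX.
have X0 : X != set0 by apply: contraNneq nX => ->; apply: indep0.
have : (0 < #|X|)%N by rewrite card_gt0.
have : (mrank M X <= (#|X|).-1)%N.
  apply/bigmax_leqP => I /andP [IX iI].
  have : I \proper X by rewrite properEneq IX andbT; apply: contraNneq nX => <-.
  by move/proper_card; case: #|X|.
by case: #|X|.
Qed.

Lemma part_eq (U : finType) (Omega : {set {set U}}) (w1 w2 : {set U}) (x : U) :
  partition Omega [set: U] -> w1 \in Omega -> w2 \in Omega -> x \in w1 -> x \in w2 -> w1 = w2.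
Proof.
case/and3P => _ tI _ h1 h2 x1 x2.
by rewrite -(def_pblock tI h1 x1) (def_pblock tI h2 x2).
Qed.

Lemma part_mem (U : finType) (Omega : {set {set U}}) (x : U) :
  partition Omega [set: U] -> pblock Omega x \in Omega /\ x \in pblock Omega x.
Proof.
case/and3P => /eqP cv _ _; split; first by apply: pblock_mem; rewrite cv inE.
by rewrite mem_pblock cv inE.
Qed.

Lemma card2_eq (U : finType) (w : {set U}) x y :
  #|w| = 2%N -> x \in w -> y \in w -> x != y -> w = [set x; y].
Proof.
move=> c xw yw nxy; apply/esym/eqP; rewrite eqEcard c cards2 nxy leqnn andbT.
by apply/subsetP => z; rewrite !inE => /orP [] /eqP ->.
Qed.

Lemma card2_other (U : finType) (w : {set U}) x :
  #|w| = 2%N -> x \in w -> exists2 y, y \in w & y != x.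
Proof.
move=> c xw; have H := cardsD1 x w; rewrite xw c in H.
have : (0 < #|w :\ x|)%N by lia.
by case/card_gt0P => y; rewrite !inE => /andP [] ? ?; exists y.
Qed.

Lemma trans_card (U : finType) (Omega : {set {set U}}) (S : {set U}) :
  partition Omega [set: U] -> om_transversal Omega S -> #|S| = #|Omega|.
Proof.
move=> P T.
have inj : {in S &, injective (pblock Omega)}.
  move=> u1 u2 h1 h2 e.
  have [pm1 pu1] := part_mem u1 P; have [pm2 pu2] := part_mem u2 P.
  have := T _ pm1; move/eqP; case/cards1P => z hz.
  have : u1 \in S :&: pblock Omega u1 by rewrite inE h1 pu1.
  have : u2 \in S :&: pblock Omega u1 by rewrite inE h2 e pu2.
  by rewrite hz !inE => /eqP -> /eqP ->.
rewrite -(card_in_imset inj); apply: eq_card => w; apply/imsetP/idP.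
  by case=> u _ ->; case: (part_mem u P).
move=> wO; have := T _ wO; move/eqP; case/cards1P => z hz.
have : z \in S :&: w by rewrite hz inE.
rewrite inE => /andP [zS zw]; exists z => //.
by case/and3P: P => _ tI _; rewrite (def_pblock tI wO zw).
Qed.


Lemma mul_rows (F : fieldType) (U : finType) n (v : U -> 'rV[F]_n) (S : {set U})
   (x : 'rV[F]_#|S|) :
  x *m (\matrix_(i < #|S|) v (enum_val i)) = \sum_(i < #|S|) x 0 i *: v (enum_val i).
Proof.
rewrite mulmx_sum_row; apply: eq_bigr => i _; congr (_ *: _).
by apply/rowP => j; rewrite !mxE.
Qed.

Lemma indep_lin (F : fieldType) (U : finType) n (M : matroid U) (v : U -> 'rV[F]_n)
  (S : {set U}) : represents M v ->
  (forall c : U -> F, \sum_(u in S) c u *: v u = 0 -> forall u, u \in S -> c u = 0) ->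
  indep M S.
Proof.
move=> rep H; rewrite rep -kermx_eq0; apply/eqP/row_matrixP => i.
set X := (\matrix_(i < #|S|) v (enum_val i)).
set x := row i (kermx X).
have xX : x *m X = 0 by rewrite /x -row_mul mulmx_ker row0.
rewrite row0; apply/rowP => j; rewrite mxE.
have x0S : enum_val j \in S by apply: enum_valP.
pose c u := x 0 (enum_rank_in x0S u).
have := H c; rewrite big_enum_val.
have e : \sum_(i0 < #|S|) c (enum_val i0) *: v (enum_val i0) = 0.
  rewrite -[X in _ = X]xX mul_rows; apply: eq_bigr => k _; by rewrite /c enum_valK_in.
move/(_ e (enum_val j) x0S); rewrite /c enum_valK_in /x mxE => ->; by rewrite mxE.
Qed.

Lemma dep_lin (F : fieldType) (U : finType) n (M : matroid U) (v : U -> 'rV[F]_n)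
  (S : {set U}) (c : U -> F) (u0 : U) : represents M v ->
  \sum_(u in S) c u *: v u = 0 -> u0 \in S -> c u0 != 0 -> ~~ indep M S.
Proof.
move=> rep e u0S cu0; rewrite rep; apply/negP => rf.
set X := (\matrix_(i < #|S|) v (enum_val i)).
pose x : 'rV[F]_#|S| := \row_i c (enum_val i).
have xX : x *m X = 0 *m X.
  rewrite big_enum_val in e.
  by rewrite mul0mx mul_rows -[X in _ = X]e; apply: eq_bigr => i _; rewrite mxE.
have := row_free_inj rf xX => /rowP /(_ (enum_rank_in u0S u0)).
by rewrite !mxE enum_rankK_in // => /eqP; rewrite (negbTE cu0).
Qed.


Lemma std_coord (F : fieldType) (U : finType) (B : {set U}) (A : U -> U -> F)
   (S : {set U}) (c : U -> F) (d : U) :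
  (\sum_(u in S) c u *: std_vec B A u) 0 (enum_rank d) =
  \sum_(u in S) c u * (if d \in B then (if u \in B then (u == d)%:R else A d u) else 0).
Proof.
rewrite summxE; apply: eq_bigr => u _; by rewrite !mxE enum_rankK.
Qed.

Lemma sum_delta (F : fieldType) (U : finType) (R : {set U}) (c : U -> F) d :
  \sum_(u in R) c u * (u == d)%:R = if d \in R then c d else 0.
Proof.
case: ifP => dR.
  rewrite (bigD1 d) //= eqxx mulr1 big1 ?addr0 // => u /andP [_ /negbTE ->].
  by rewrite mulr0.
rewrite big1 // => u uR; have -> : (u == d) = false.
  by apply/negbTE; apply: contraFneq dR => <-.
by rewrite mulr0.
Qed.

Lemma indep_add (F : fieldType) (U : finType) (M : matroid U) (B R : {set U})
  (A : U -> U -> F) (b t : U) :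
  std_rep M B A -> R \subset B -> b \in B -> b \notin R -> t \notin B -> A b t != 0 ->
  indep M (t |: R).
Proof.
move=> rep RB bB bR tB Abt; apply: (indep_lin rep) => c e.
have tR : t \notin R by apply: contra tB; apply: (subsetP RB).
have sR : forall d, d \in B -> \sum_(u in R) c u * (if d \in B then (if u \in B then (u == d)%:R else A d u) else 0)
    = if d \in R then c d else 0.
  move=> d dB; rewrite -sum_delta; apply: eq_bigr => u uR.
  by rewrite dB (subsetP RB _ uR).
have ct : c t = 0.
  have := congr1 (fun m : 'rV[F]_ _ => m 0 (enum_rank b)) e.
  rewrite /= std_coord (big_setU1 _ tR) /= sR // (negbTE bR) bB (negbTE tB) addr0 mxE.
  by move/eqP; rewrite mulf_eq0 (negbTE Abt) orbF => /eqP.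
move=> u; rewrite !inE => /orP [/eqP -> // | uR].
have := congr1 (fun m : 'rV[F]_ _ => m 0 (enum_rank u)) e.
have uB := subsetP RB _ uR.
by rewrite /= std_coord (big_setU1 _ tR) /= sR // uR ct mul0r add0r mxE.
Qed.

Lemma dep_add (F : fieldType) (U : finType) (M : matroid U) (B R : {set U})
  (A : U -> U -> F) (t : U) :
  std_rep M B A -> R \subset B -> t \notin B ->
  (forall d, d \in B -> d \notin R -> A d t = 0) ->
  ~~ indep M (t |: R).
Proof.
move=> rep RB tB H.
have tR : t \notin R by apply: contra tB; apply: (subsetP RB).
pose c u := if u == t then 1 else - A u t.
apply: (dep_lin (c := c) (u0 := t) rep); last by rewrite /c eqxx oner_neq0.
  2: by rewrite setU11.
apply/rowP => j; rewrite -(enum_valK j); set d := enum_val j.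
rewrite std_coord (big_setU1 _ tR) /= mxE /c eqxx mul1r (negbTE tB).
have -> : \sum_(i in R) (if i == t then 1 else - A i t) *
     (if d \in B then if i \in B then (i == d)%:R else A d i else 0) =
   \sum_(i in R) (- A i t) * (if d \in B then (i == d)%:R else 0).
  apply: eq_bigr => u uR; rewrite (subsetP RB _ uR).
  by have -> : (u == t) = false by apply/negbTE; apply: contraNneq tR => <-.
case: ifP => dB; last by rewrite add0r big1 // => u _; rewrite mulr0.
rewrite sum_delta; case: ifP => dR.
  by rewrite addrN.
by rewrite H ?dR // addr0.
Qed.


Lemma mk_disj (U : finType) (A B : {set U}) :
  (forall x, x \in A -> x \in B -> False) -> [disjoint A & B].
Proof.
move=> H; rewrite disjoints_subset; apply/subsetP => u uA; rewrite inE.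
by apply/negP => uB; exact: H uA uB.
Qed.

Lemma subtrans_sub (U : finType) (Omega : {set {set U}}) (S B : {set U}) :
  subtransversal Omega B -> S \subset B -> subtransversal Omega S.
Proof.
move=> T SB w wO; apply: leq_trans (T w wO); apply: subset_leq_card.
by apply: setSI.
Qed.

Lemma trans_subtrans (U : finType) (Omega : {set {set U}}) (B : {set U}) :
  om_transversal Omega B -> subtransversal Omega B.
Proof. by move=> T w wO; rewrite T. Qed.

Lemma tight_use (U : finType) (M : matroid U) (Omega : {set {set U}}) (S w : {set U}) :
  Z_tight M Omega -> subtransversal Omega S -> #|S| = (#|Omega| - 1)%N ->
  w \in Omega -> [disjoint w & S] ->
  (forall x, x \in w -> exists2 J, indep M J & (J \subset x |: S) && (mrank M S < #|J|)%N) ->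
  False.
Proof.
case=> _ T sS cS wO dw H.
have [x xw e] := T S w sS cS wO dw.
have [J iJ /andP [JS lt]] := H x xw.
have := mrank_ge JS iJ; rewrite e => le.
by have := leq_trans lt le; rewrite ltnn.
Qed.

Lemma subtrans_add (U : finType) (Omega : {set {set U}}) (I w : {set U}) z :
  partition Omega [set: U] -> subtransversal Omega I -> w \in Omega ->
  [disjoint w & I] -> z \in w -> subtransversal Omega (z |: I).
Proof.
move=> P sI wO dw zw w' w'O.
case: (boolP (z \in w')) => zw'.
  have ee := part_eq P wO w'O zw zw'; subst w'.
  have : (z |: I) :&: w \subset [set z].
    apply/subsetP => u; rewrite !inE => /andP [/orP [-> // | uI] uw].
    by rewrite (disjointFr dw uw) in uI.
  by move/subset_leq_card; rewrite cards1.
apply: leq_trans (sI w' w'O); apply: subset_leq_card.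
apply/subsetP => u; rewrite !inE => /andP [/orP [/eqP -> | -> ] uw'] //.
by rewrite uw' in zw'.
Qed.

Lemma grow (U : finType) (M : matroid U) (Omega : {set {set U}}) (I : {set U}) :
  two_sheltering M Omega -> indep M I -> subtransversal Omega I ->
  om_transversal Omega I \/ exists J, [/\ indep M J, subtransversal Omega J & (#|I| < #|J|)%N].
Proof.
move=> [[P sh] c2] iI sI.
case: (boolP [exists w in Omega, [disjoint w & I]]).
  case/exists_inP => w wO dw; right.
  have : (0 < #|w|)%N by rewrite c2.
  case/card_gt0P => x xw.
  have [y yw yx] := card2_other (c2 w wO) xw.
  have nI : forall z, z \in w -> (#|I| < #|z |: I|)%N.
    by move=> z zw; rewrite cardsU1 (disjointFr dw zw).
  have xy : x != y by rewrite eq_sym.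
  case/orP: (sh I w x y iI sI wO dw xw yw xy) => ind.
    by exists (x |: I); split => //; [apply: subtrans_add P sI wO dw xw | apply: nI].
  by exists (y |: I); split => //; [apply: subtrans_add P sI wO dw yw | apply: nI].
move/exists_inPn => H; left => w wO.
apply/eqP; rewrite eqn_leq sI // card_gt0.
have := H w wO; apply: contra => /eqP e.
by rewrite -setI_eq0 setIC e.
Qed.

Lemma exists_trans (U : finType) (M : matroid U) (Omega : {set {set U}}) :
  two_sheltering M Omega -> exists B, indep M B /\ om_transversal Omega B.
Proof.
move=> ts.
suff : forall k (I : {set U}), (#|U| - #|I| <= k)%N -> indep M I -> subtransversal Omega I ->
   exists B, indep M B /\ om_transversal Omega B.
  move/(_ #|U| set0); rewrite cards0 subn0 => /(_ (leqnn _) (indep0 M)); apply.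
  by move=> w _; rewrite set0I cards0.
elim=> [|k IH] I hk iI sI; case: (grow ts iI sI) => [T | [J [iJ sJ lt]]].
- by exists I.
- have := subset_leq_card (subsetT J); rewrite cardsT; lia.
- by exists I.
- apply: (IH J) => //; have := subset_leq_card (subsetT J); rewrite cardsT; lia.
Qed.


Lemma rank_eq (U : finType) (M : matroid U) (Omega : {set {set U}}) :
  two_sheltering M Omega -> Z_tight M Omega -> mrankM M = #|Omega|.
Proof.
move=> ts tt; have [[P sh] c2] := ts.
have [B0 [iB TB]] := exists_trans ts.
have cB := trans_card P TB.
apply/eqP; rewrite eqn_leq; apply/andP; split; last first.
  by rewrite -cB; apply: mrank_ge (subsetT _) iB.
apply/bigmax_leqP => I /andP [_ iI]; rewrite leqNgt; apply/negP => lt.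
rewrite -cB in lt.
have [x /setDP [xI xB] ixB] := indep_aug iB iI lt.
have [wO xw] := part_mem x P; set w := pblock Omega x in wO xw.
have := TB w wO; move/eqP; case/cards1P => b hb.
have : b \in B0 :&: w by rewrite hb inE.
rewrite inE => /andP [bB bw].
have bx : b != x by apply: contraNneq xB => <-.
have ew := card2_eq (c2 w wO) bw xw bx.
apply: (tight_use (S := B0 :\ b) (w := w) tt).
- by apply: subtrans_sub (trans_subtrans TB) (subsetDl _ _).
- by rewrite (cardsD1 b B0) bB in cB; lia.
- exact: wO.
- apply: mk_disj => u uw; rewrite !inE => /andP [ub uB].
  have : u \in B0 :&: w by rewrite inE uB uw.
  by rewrite hb inE (negbTE ub).
- move=> y; rewrite ew !inE => /orP [] /eqP ->.
  + exists B0 => //; rewrite setD1K // subxx /=.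
    by apply: leq_ltn_trans (mrank_le _ _) _; rewrite (cardsD1 b B0) bB.
  + exists (x |: (B0 :\ b)).
      by apply: indep_sub ixB; apply: setUS; apply: subsetDl.
    rewrite subxx /=; apply: leq_ltn_trans (mrank_le _ _) _.
    by rewrite cardsU1 !inE (negbTE xB) andbF.
Qed.

Lemma zero_diag (F : fieldType) (U : finType) (M : matroid U) (Omega : {set {set U}})
   (B : {set U}) (A : U -> U -> F) b t :
  two_sheltering M Omega -> Z_tight M Omega -> indep M B -> om_transversal Omega B ->
  std_rep M B A -> b \in B -> t \notin B -> [set b; t] \in Omega -> A b t = 0.
Proof.
move=> [[P sh] c2] tt iB TB rep bB tB wO.
have cB := trans_card P TB.
apply/eqP; apply/negPn/negP => Abt.
apply: (tight_use (S := B :\ b) (w := [set b; t]) tt).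
- by apply: subtrans_sub (trans_subtrans TB) (subsetDl _ _).
- by rewrite (cardsD1 b B) bB in cB; lia.
- exact: wO.
- apply: mk_disj => u; rewrite !inE => /orP [] /eqP -> /andP [].
    by rewrite eqxx.
  by rewrite (negbTE tB).
- move=> y; rewrite !inE => /orP [] /eqP ->.
  + exists B => //; rewrite setD1K // subxx /=.
    by apply: leq_ltn_trans (mrank_le _ _) _; rewrite (cardsD1 b B) bB.
  + exists (t |: (B :\ b)).
      apply: (indep_add (b := b) rep) => //; first exact: subsetDl.
      by rewrite !inE eqxx.
    rewrite subxx /=; apply: leq_ltn_trans (mrank_le _ _) _.
    by rewrite cardsU1 !inE (negbTE tB) andbF.
Qed.


Lemma sym_half (F : fieldType) (U : finType) (M : matroid U) (Omega : {set {set U}})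
   (B : {set U}) (A : U -> U -> F) b b' t t' :
  two_sheltering M Omega -> Z_tight M Omega -> indep M B -> om_transversal Omega B ->
  std_rep M B A -> b \in B -> b' \in B -> b != b' -> t \notin B -> t' \notin B ->
  [set b; t'] \in Omega -> [set b'; t] \in Omega -> A b' t' = 0 -> A b t = 0.
Proof.
move=> ts tt iB TB rep bB b'B bb' tB t'B w1 w2 A0.
have [[P sh] c2] := ts.
have Abt' : A b t' = 0 := zero_diag ts tt iB TB rep bB t'B w1.
have cB := trans_card P TB.
apply/eqP; apply/negPn/negP => Abt.
set R := B :\ b :\ b'.
have RB : R \subset B by rewrite /R; apply: subset_trans (subsetDl _ _) (subsetDl _ _).
have bR : b \notin R by rewrite !inE eqxx andbF.
have b'R : b' \notin R by rewrite !inE eqxx.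
have tR : t \notin R by apply: contra tB; apply: (subsetP RB).
have t'R : t' \notin R by apply: contra t'B; apply: (subsetP RB).
have b'Bb : b' \in B :\ b by rewrite !inE eq_sym bb' b'B.
have cR : #|R| = (#|B| - 2)%N.
  have h1 := cardsD1 b B; have h2 := cardsD1 b' (B :\ b).
  rewrite bB /= in h1; rewrite b'Bb /= in h2; rewrite /R.
  move: h1 h2; clear; lia.
have tt' : t != t'.
  apply/negP => /eqP e; subst t'.
  have i1 : t \in [set b; t] by rewrite !inE eqxx orbT.
  have i2 : t \in [set b'; t] by rewrite !inE eqxx orbT.
  have := part_eq P w1 w2 i1 i2.
  by move/setP/(_ b); rewrite !inE eqxx /= (negbTE bb') => /esym /eqP ebt; rewrite -ebt bB in tB.
have dep : ~~ indep M (t' |: R).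
  apply: (dep_add rep RB t'B) => d dB dR.
  move: dR; rewrite !inE dB andbT negb_and !negbK => /orP [] /eqP -> //.
apply: (tight_use (S := t' |: R) (w := [set b'; t]) tt).
- move=> w wO; case: (boolP (t' \in w)) => t'w.
    have ew := part_eq P w1 wO (setU1r _ (set11 _)) t'w; subst w.
    have : (t' |: R) :&: [set b; t'] \subset [set t'].
      apply/subsetP => u; rewrite !inE => /andP [/orP [-> // | uR] /orP [/eqP eb | ->//]].
      by move: uR; rewrite eb eqxx /= andbF.
    by move/subset_leq_card; rewrite cards1.
  apply: leq_trans (trans_subtrans TB wO); apply: subset_leq_card.
  apply/subsetP => u; rewrite !inE => /andP [/orP [/eqP eu | uR] uw].
    by move: uw; rewrite eu (negbTE t'w).
  by rewrite uw andbT; case/and3P: uR.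
- rewrite cardsU1 t'R cR -cB; have : (2 <= #|B|)%N.
    have h1 := cardsD1 b B; have h2 := cardsD1 b' (B :\ b).
    rewrite bB /= in h1; rewrite b'Bb /= in h2.
    move: h1 h2; clear; lia.
  clear; lia.
- exact: w2.
- apply: mk_disj => u uw uS; move: uw; rewrite !inE => /orP [] /eqP eu;
    move: uS; rewrite eu in_setU1 => /orP [/eqP e|].
  + by move: b'B; rewrite e (negbTE t'B).
  + by rewrite (negbTE b'R).
  + by move: tt'; rewrite e eqxx.
  + by rewrite (negbTE tR).
- have lt : (mrank M (t' |: R) < #|t' |: R|)%N := mrank_lt dep.
  have cS : #|t' |: R| = #|R|.+1 by rewrite cardsU1 t'R.
  move=> y; rewrite !inE => /orP [] /eqP ->.
  + exists (b' |: R).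
      by apply: indep_sub iB; rewrite subUset sub1set b'B RB.
    rewrite setUCA subsetUr /=; apply: leq_trans lt _.
    by rewrite cS cardsU1 b'R.
  + exists (t |: R).
      exact: (indep_add (b := b) rep).
    rewrite setUCA subsetUr /=; apply: leq_trans lt _.
    by rewrite cS cardsU1 tR.
Qed.

Theorem proposition2p7 (F : fieldType) (U : finType) (M : matroid U)
    (Omega : {set {set U}}) :
  two_sheltering M Omega -> Z_tight M Omega -> representable F M ->
  mrankM M = #|Omega| /\
  (forall (B : {set U}) (A : U -> U -> F),
     is_basis M B -> om_transversal Omega B -> std_rep M B A ->
     (forall b t, b \in B -> t \notin B -> [set b; t] \in Omega -> A b t = 0) /\
     ((forall x : F, x = 0 \/ x = 1) ->
        forall b b' t t', b \in B -> b' \in B -> t \notin B -> t' \notin B ->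
          [set b; t'] \in Omega -> [set b'; t] \in Omega -> A b t = A b' t')).
Proof.
move=> ts tt _; split; first exact: rank_eq ts tt.
move=> B A [iB _] TB rep; split.
  by move=> b t bB tB w; exact: zero_diag ts tt iB TB rep bB tB w.
move=> gf2 b b' t t' bB b'B tB t'B w1 w2.
have [[P _] _] := ts.
case: (eqVneq b b') => [eb | nb].
  subst b'.
  have i1 : b \in [set b; t'] by rewrite !inE eqxx.
  have i2 : b \in [set b; t] by rewrite !inE eqxx.
  have := part_eq P w1 w2 i1 i2 => /setP /(_ t').
  rewrite !inE eqxx orbT => /esym /orP [/eqP e | /eqP -> //].
  by move: bB; rewrite -e (negbTE t'B).
have h1 := sym_half ts tt iB TB rep bB b'B nb tB t'B w1 w2.
have h2 := sym_half ts tt iB TB rep b'B bB (negbT (introF eqP (fun e => (negP nb) (introT eqP (esym e))))) t'B tB w2 w1.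
case: (gf2 (A b t)) => e1; case: (gf2 (A b' t')) => e2; rewrite e1 e2 //.
  by move: (h2 e1); rewrite e2 => /eqP; rewrite oner_eq0.
by move: (h1 e2); rewrite e1 => /eqP; rewrite oner_eq0.
Qed.
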